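(* If $u,v:\mathbb{C}\to\mathbb{R}$ are harmonic and $f=u+iv$ is nonconstant, then $\mathcal{D}(f(\mathbb{C}))$ is a nonempty closed subset of $\partial\mathbb{D}$.
   Context: $\partial\mathbb{D}$ is the unit circle. For a set $\mathcal{R}\subset\mathbb{C}$, a point $e^{i\theta}\in\partial\mathbb{D}$ is an asymptotic direction of $\mathcal{R}$ if there exist points $w_n\in\mathcal{R}$ and positive numbers $\varepsilon_n\to 0$ with $\varepsilon_n w_n\to e^{i\theta}$; $\mathcal{D}(\mathcal{R})$ denotes the set of asymptotic directions of $\mathcal{R}$. *)

(* Defs.v *)
From Stdlib Require Import Reals.
From Coquelicot Require Import Coquelicot.
Open Scope R_scope.

Definition dx (u : C -> R) : C -> R :=
  fun z => Derive (fun t => u (t, snd z)) (fst z).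
Definition dy (u : C -> R) : C -> R :=
  fun z => Derive (fun t => u (fst z, t)) (snd z).

Definition has_partials (u : C -> R) : Prop :=
  forall z : C, ex_derive (fun t => u (t, snd z)) (fst z) /\
                ex_derive (fun t => u (fst z, t)) (snd z).

Definition C2_fun (u : C -> R) : Prop :=
  has_partials u /\ has_partials (dx u) /\ has_partials (dy u) /\
  forall z : C,
    continuous u z /\ continuous (dx u) z /\ continuous (dy u) z /\
    continuous (dx (dx u)) z /\ continuous (dx (dy u)) z /\
    continuous (dy (dx u)) z /\ continuous (dy (dy u)) z.

Definition harmonic (u : C -> R) : Prop :=
  C2_fun u /\ forall z : C, dx (dx u) z + dy (dy u) z = 0.

Definition asymptotic_direction (S : C -> Prop) (z : C) : Prop :=
  Cmod z = 1 /\
  exists (w : nat -> C) (eps : nat -> R),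
    (forall n, S (w n)) /\ (forall n, 0 < eps n) /\
    is_lim_seq eps 0 /\
    filterlim (fun n => Cmult (RtoC (eps n)) (w n)) eventually (locally z).

Definition image (f : C -> C) : C -> Prop := fun w => exists z, w = f z.

(* Main.v *)
Require Import Defs.
From Stdlib Require Import Reals Lra Lia Classical ClassicalEpsilon List.
From Coquelicot Require Import Coquelicot.
Open Scope R_scope.

Lemma small_inv (eps : R) : 0 < eps -> exists N : nat, forall n, (N <= n)%nat -> / (INR n + 1) < eps.
Proof.
  intros He. destruct (nfloor_ex (/eps)) as [N HN].
  { left; apply Rinv_0_lt_compat; lra. }
  exists N. intros n Hn. apply le_INR in Hn.
  assert (0 < INR n + 1) by (pose proof (pos_INR n); lra).
  rewrite <- (Rinv_inv eps). apply Rinv_lt_contravar.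
  - apply Rmult_lt_0_compat; [apply Rinv_0_lt_compat; lra| lra].
  - lra.
Qed.

Definition good (S : C -> Prop) (d : C) : Prop :=
  forall r e, 0 < r -> 0 < e -> exists w eps, S w /\ 0 < eps < e /\
    Rabs (eps * fst w - fst d) < r /\ Rabs (eps * snd w - snd d) < r.

Lemma fst_sc (e : R) (w : C) : fst (Cmult (RtoC e) w) = e * fst w.
Proof. destruct w; simpl; ring. Qed.
Lemma snd_sc (e : R) (w : C) : snd (Cmult (RtoC e) w) = e * snd w.
Proof. destruct w; simpl; ring. Qed.

Lemma ad_good S d : asymptotic_direction S d -> good S d.
Proof.
  intros [_ [w [eps [HS [Hp [Hl Hf]]]]]] r e Hr He.
  apply is_lim_seq_spec in Hl.
  destruct (Hl (mkposreal e He)) as [N1 H1].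
  apply filterlim_locally with (eps := mkposreal r Hr) in Hf.
  destruct Hf as [N2 H2].
  pose (n := max N1 N2).
  specialize (H1 n ltac:(lia)). specialize (H2 n ltac:(lia)).
  exists (w n), (eps n). destruct H2 as [H2a H2b]. simpl in H1, H2a, H2b.
  change (Rabs ((eps n * fst (w n) - 0 * snd (w n)) - fst d) < r) in H2a.
  change (Rabs ((eps n * snd (w n) + 0 * fst (w n)) - snd d) < r) in H2b.
  replace (eps n * fst (w n) - 0 * snd (w n)) with (eps n * fst (w n)) in H2a by ring.
  replace (eps n * snd (w n) + 0 * fst (w n)) with (eps n * snd (w n)) in H2b by ring.
  specialize (Hp n).
  repeat split; auto.
  rewrite Rminus_0_r in H1. apply Rabs_def2 in H1. lra.
Qed.

Lemma good_ad S d : Cmod d = 1 -> good S d -> asymptotic_direction S d.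
Proof.
  intros Hd Hg. split; [exact Hd|].
  assert (X : forall n : nat, {p : C * R | S (fst p) /\ 0 < snd p < / (INR n + 1) /\
     Rabs (snd p * fst (fst p) - fst d) < / (INR n + 1) /\
     Rabs (snd p * snd (fst p) - snd d) < / (INR n + 1)}).
  { intro n. apply constructive_indefinite_description.
    assert (0 < / (INR n + 1)) by (apply Rinv_0_lt_compat; pose proof (pos_INR n); lra).
    destruct (Hg (/ (INR n + 1)) (/ (INR n + 1)) H H) as [w [eps Hw]].
    exists (w, eps); exact Hw. }
  exists (fun n => fst (proj1_sig (X n))), (fun n => snd (proj1_sig (X n))).
  split; [intro n; apply (proj2_sig (X n))|].
  split; [intro n; apply (proj2_sig (X n))|].
  split.
  - apply is_lim_seq_spec. intro eps. destruct (small_inv eps (cond_pos eps)) as [N HN].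
    exists N. intros n Hn. specialize (HN n Hn).
    destruct (proj2_sig (X n)) as [_ [Ha _]].
    rewrite Rminus_0_r, Rabs_pos_eq by lra. lra.
  - apply filterlim_locally. intro eps. destruct (small_inv eps (cond_pos eps)) as [N HN].
    exists N. intros n Hn. specialize (HN n Hn).
    destruct (proj2_sig (X n)) as [_ [_ [Hb Hc]]].
    split; [change (Rabs (fst (Cmult (RtoC (snd (proj1_sig (X n)))) (fst (proj1_sig (X n)))) - fst d) < eps); rewrite fst_sc
           |change (Rabs (snd (Cmult (RtoC (snd (proj1_sig (X n)))) (fst (proj1_sig (X n)))) - snd d) < eps); rewrite snd_sc]; lra.
Qed.

Lemma Cmod_le_sum (z : C) : Cmod z <= Rabs (fst z) + Rabs (snd z).
Proof.
  destruct z as [a b]. unfold Cmod; simpl.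
  pose proof (Rabs_pos a); pose proof (Rabs_pos b).
  rewrite <- (sqrt_Rsqr (Rabs a + Rabs b)) by lra.
  apply sqrt_le_1_alt. unfold Rsqr.
  assert (E1 : a * a = Rabs a * Rabs a) by (rewrite <- Rabs_mult; rewrite Rabs_pos_eq; nra).
  assert (E2 : b * b = Rabs b * Rabs b) by (rewrite <- Rabs_mult; rewrite Rabs_pos_eq; nra).
  pose proof (Rmult_le_pos _ _ H H0).
  replace (a * (a * 1) + b * (b * 1)) with (a * a + b * b) by ring. rewrite E1, E2. nra.
Qed.

Lemma closed_ad S : closed (asymptotic_direction S).
Proof.
  intros x Hx.
  assert (Hn : forall r, 0 < r -> exists d, asymptotic_direction S d /\
     Rabs (fst d - fst x) < r /\ Rabs (snd d - snd x) < r).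
  { intros r Hr. apply NNPP. intro Hne. apply Hx.
    exists (mkposreal r Hr). intros y Hy HD. apply Hne. exists y.
    destruct x, y. split; [exact HD| exact Hy]. }
  apply good_ad.
  - apply Rle_antisym; apply Rnot_lt_le; intro Hlt.
    + set (r := (Cmod x - 1) / 2).
      destruct (Hn r ltac:(unfold r; lra)) as [d [[Hd _] [H1 H2]]].
      pose proof (Cmod_triangle d (x - d)%C).
      pose proof (Cmod_le_sum (x - d)%C).
      replace (d + (x - d))%C with x in H by (destruct x, d; apply injective_projections; simpl; ring).
      destruct x, d; simpl in *. rewrite Rabs_minus_sym in H1, H2. unfold r, Rminus in *. lra.
    + set (r := (1 - Cmod x) / 2).
      destruct (Hn r ltac:(unfold r; lra)) as [d [[Hd _] [H1 H2]]].
      pose proof (Cmod_triangle x (d - x)%C).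
      pose proof (Cmod_le_sum (d - x)%C).
      replace (x + (d - x))%C with d in H by (destruct x, d; apply injective_projections; simpl; ring).
      destruct x, d; simpl in *. unfold r, Rminus in *. lra.
  - intros r e Hr He.
    destruct (Hn (r/2) ltac:(lra)) as [d [Hd [H1 H2]]].
    destruct (ad_good S d Hd (r/2) e ltac:(lra) He) as [w [eps [HS [He' [H3 H4]]]]].
    exists w, eps. repeat split; auto; try lra.
    + replace (eps * fst w - fst x) with ((eps * fst w - fst d) + (fst d - fst x)) by ring.
      eapply Rle_lt_trans; [apply Rabs_triang|]. lra.
    + replace (eps * snd w - snd x) with ((eps * snd w - snd d) + (snd d - snd x)) by ring.
      eapply Rle_lt_trans; [apply Rabs_triang|]. lra.
Qed.

Lemma list_min {T : Type} (l : list T) (f : T -> R) :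
  (forall t, 0 < f t) -> exists E, 0 < E /\ forall t, In t l -> E <= f t.
Proof.
  intros Hf. induction l as [|a l IH].
  - exists 1. split; [lra| intros t []].
  - destruct IH as [E [HE HE']]. exists (Rmin (f a) E). split.
    + apply Rmin_pos; auto.
    + intros t [<-|Ht]; [apply Rmin_l|]. eapply Rle_trans; [apply Rmin_r| auto].
Qed.

Lemma not_good S d : ~ good S d -> exists r e, 0 < r /\ 0 < e /\
  forall w eps, S w -> 0 < eps < e ->
    ~ (Rabs (eps * fst w - fst d) < r /\ Rabs (eps * snd w - snd d) < r).
Proof.
  intros Hg. apply NNPP; intro Hn; apply Hg; intros r e Hr He.
  apply NNPP; intro Hn2; apply Hn; exists r, e; split; [auto| split; [auto|]].
  intros w eps HS Heps [H1 H2]; apply Hn2; exists w, eps; auto.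
Qed.

Definition cT (t : Compactness.Tn 2 R) : C := (fst t, fst (snd t)).

Lemma nonempty_ad S : (forall K, exists w, S w /\ K < Cmod w) ->
  exists d, asymptotic_direction S d.
Proof.
  intros Hub. apply NNPP; intro Hno.
  assert (Hr : forall t : Compactness.Tn 2 R, exists re : R * R, 0 < fst re /\ 0 < snd re /\
     (Cmod (cT t) = 1 -> forall w eps, S w -> 0 < eps < snd re ->
        ~ (Rabs (eps * fst w - fst (cT t)) < fst re /\ Rabs (eps * snd w - snd (cT t)) < fst re)) /\
     (Cmod (cT t) <> 1 -> fst re <= Rabs (Cmod (cT t) - 1) / 4)).
  { intro t. destruct (Req_dec (Cmod (cT t)) 1) as [E|E].
    - assert (~ good S (cT t)) as Hng.
      { intro Hg. apply Hno. exists (cT t). apply good_ad; auto. }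
      destruct (not_good _ _ Hng) as [r [e [Hr [He Hw]]]].
      exists (r, e). simpl. repeat split; auto; intro; contradiction.
    - exists (Rabs (Cmod (cT t) - 1) / 4, 1). simpl.
      assert (0 < Rabs (Cmod (cT t) - 1)) by (apply Rabs_pos_lt; lra).
      repeat split; try lra; intro; contradiction. }
  pose (re := fun t => proj1_sig (constructive_indefinite_description _ (Hr t))).
  assert (Hre : forall t, 0 < fst (re t) /\ 0 < snd (re t) /\
     (Cmod (cT t) = 1 -> forall w eps, S w -> 0 < eps < snd (re t) ->
        ~ (Rabs (eps * fst w - fst (cT t)) < fst (re t) /\ Rabs (eps * snd w - snd (cT t)) < fst (re t))) /\
     (Cmod (cT t) <> 1 -> fst (re t) <= Rabs (Cmod (cT t) - 1) / 4)).
  { intro t. exact (proj2_sig (constructive_indefinite_description _ (Hr t))). }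
  clearbody re; clear Hr.
  pose (delta := fun t => mkposreal (fst (re t)) (proj1 (Hre t))).
  apply (compactness_list 2 (-1, (-1, tt)) (1, (1, tt)) delta). intros [l Hl].
  destruct (list_min l (fun t => snd (re t)) (fun t => proj1 (proj2 (Hre t)))) as [E [HE HEl]].
  destruct (Hub (2 / E)) as [w [HSw Hw]].
  assert (Hw0 : 0 < Cmod w) by (assert (0 < 2 / E) by (apply Rdiv_lt_0_compat; lra); lra).
  set (eps := / Cmod w).
  assert (Heps : 0 < eps < E).
  { unfold eps. split; [apply Rinv_0_lt_compat; lra|].
    assert (H2E : 0 < 2 / E) by (apply Rdiv_lt_0_compat; lra).
    assert (/ Cmod w < / (2 / E)) by (apply Rinv_lt_contravar; [apply Rmult_lt_0_compat|]; lra).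
    replace (/ (2 / E)) with (E / 2) in H by (field; lra). lra. }
  set (z := Cmult (RtoC eps) w).
  assert (Hz : Cmod z = 1).
  { unfold z. rewrite Cmod_mult, Cmod_R, Rabs_pos_eq by lra. unfold eps. field. lra. }
  assert (Ez1 : fst z = eps * fst w) by (unfold z; apply fst_sc).
  assert (Ez2 : snd z = eps * snd w) by (unfold z; apply snd_sc).
  clearbody z.
  assert (Hz1 : Rabs (fst z) <= 1) by (rewrite <- Hz; apply re_le_Cmod).
  assert (Hz2 : Rabs (snd z) <= 1).
  { rewrite <- Hz. pose proof (Rmax_Cmod z). eapply Rle_trans; [|exact H]. apply Rmax_r. }
  destruct (Hl (fst z, (snd z, tt))) as [t [Hin [Hbt Hct]]].
  { simpl. apply Rabs_le_between in Hz1. apply Rabs_le_between in Hz2. repeat split; lra. }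
  destruct t as [t1 [t2 []]]. simpl in Hct, Hbt.
  destruct Hct as [Hc1 [Hc2 _]].
  destruct (Hre (t1, (t2, tt))) as [_ [_ [Hcirc Hoff]]].
  destruct (Req_dec (Cmod (cT (t1, (t2, tt)))) 1) as [E1|E1].
  - apply (Hcirc E1 w eps HSw).
    + split; [lra|]. eapply Rlt_le_trans; [apply Heps| apply (HEl _ Hin)].
    + unfold cT; simpl. rewrite <- Ez1, <- Ez2. split; assumption.
  - specialize (Hoff E1). unfold cT in Hoff, E1. simpl in Hoff.
    pose proof (Cmod_triangle z ((t1, t2) - z)%C) as T1.
    pose proof (Cmod_triangle (t1, t2) (z - (t1, t2))%C) as T2.
    pose proof (Cmod_le_sum ((t1, t2) - z)%C) as T3.
    pose proof (Cmod_le_sum (z - (t1, t2))%C) as T4.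
    clear Ez1 Ez2. replace (z + ((t1, t2) - z))%C with (t1, t2) in T1 by (destruct z; apply injective_projections; simpl; ring).
    replace ((t1, t2) + (z - (t1, t2)))%C with z in T2 by (destruct z; apply injective_projections; simpl; ring).
    destruct z as [z1 z2]. simpl in *. unfold Rminus in *.
    replace (Rabs (t1 + - z1)) with (Rabs (z1 + - t1)) in T3 by (rewrite <- Rabs_Ropp; f_equal; ring).
    replace (Rabs (t2 + - z2)) with (Rabs (z2 + - t2)) in T3 by (rewrite <- Rabs_Ropp; f_equal; ring).
    revert Hoff. unfold Rabs at 1. destruct (Rcase_abs (Cmod (t1, t2) + - (1))); intro Hoff; lra.
Qed.

Lemma d2_max (g g1 : R -> R) x0 D r : 0 < r ->
  (forall t, is_derive g t (g1 t)) -> is_derive g1 x0 D ->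
  (forall t, Rabs (t - x0) < r -> g t <= g x0) -> D <= 0.
Proof.
  intros Hr Hg Hg1 Hmax.
  assert (Hz : g1 x0 = 0).
  { pose proof (proj1 (is_derive_Reals _ _ _) (Hg x0)) as Hd.
    pose (pr := exist _ (g1 x0) Hd : derivable_pt g x0).
    change (derive_pt g x0 pr = 0).
    apply (deriv_maximum g (x0 - r) (x0 + r) x0 pr); try lra.
    intros x H1 H2. apply Hmax. apply Rabs_def1; lra. }
  apply Rnot_lt_le; intro HD.
  apply is_derive_Reals in Hg1.
  destruct (Hg1 (D/2) ltac:(lra)) as [delta Hdelta].
  set (h0 := Rmin delta r / 2).
  assert (Hh0 : 0 < h0 /\ h0 < delta /\ h0 < r).
  { unfold h0. pose proof (cond_pos delta). pose proof (Rmin_l delta r). pose proof (Rmin_r delta r).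
    assert (0 < Rmin delta r) by (apply Rmin_pos; lra). lra. }
  destruct (MVT_cor2 g g1 x0 (x0 + h0)) as [c [Hc1 Hc2]]; [lra| |].
  { intros c _. apply is_derive_Reals. apply Hg. }
  assert (Hpos : 0 < g1 c).
  { specialize (Hdelta (c - x0) ltac:(lra)).
    assert (Rabs (c - x0) < delta) by (rewrite Rabs_pos_eq; lra).
    specialize (Hdelta H). replace (x0 + (c - x0)) with c in Hdelta by ring.
    rewrite Hz, Rminus_0_r in Hdelta. apply Rabs_def2 in Hdelta.
    destruct Hdelta as [_ Hd2].
    assert (0 < g1 c / (c - x0)) by lra.
    apply Rmult_lt_reg_r with (/ (c - x0)); [apply Rinv_0_lt_compat; lra|]. lra. }
  assert (g (x0 + h0) <= g x0).
  { apply Hmax. replace (x0 + h0 - x0) with h0 by ring. rewrite Rabs_pos_eq; lra. }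
  assert (0 < g1 c * (x0 + h0 - x0)) by (apply Rmult_lt_0_compat; lra).
  lra.
Qed.

Definition cont (f : R -> R -> R) : Prop :=
  forall x y e, 0 < e -> exists d, 0 < d /\ forall x' y',
    Rabs (x' - x) < d -> Rabs (y' - y) < d -> Rabs (f x' y' - f x y) < e.

Lemma unif (f : R -> R -> R) a b a' b' : cont f ->
  forall e, 0 < e -> exists d, 0 < d /\ forall x y x' y',
    a <= x <= b -> a' <= y <= b' -> Rabs (x' - x) < d -> Rabs (y' - y) < d ->
    Rabs (f x' y' - f x y) < e.
Proof.
  intros Hf e He.
  assert (H : forall u v, {d : R | 0 < d /\ forall x' y',
    Rabs (x' - u) < d -> Rabs (y' - v) < d -> Rabs (f x' y' - f u v) < e / 2}).
  { intros u v. apply constructive_indefinite_description. apply Hf. lra. }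
  pose (delta := fun u v => mkposreal (proj1_sig (H u v) / 2)
                   ltac:(pose proof (proj1 (proj2_sig (H u v))); lra)).
  destruct (compactness_value_2d a b a' b' delta) as [dd Hdd].
  exists dd. split; [apply cond_pos|].
  intros x y x' y' Hx Hy Hx' Hy'.
  specialize (Hdd x y Hx Hy). apply NNPP; intro Hn; apply Hdd; intros [u [v [_ [_ [H1 [H2 H3]]]]]].
  apply Hn. simpl in H1, H2, H3.
  destruct (proj2_sig (H u v)) as [Hp Hk].
  set (du := proj1_sig (H u v)) in *.
  assert (A1 : Rabs (f x y - f u v) < e / 2).
  { apply Hk; rewrite Rabs_minus_sym in *; lra. }
  assert (A2 : Rabs (f x' y' - f u v) < e / 2).
  { apply Hk.
    - replace (x' - u) with ((x' - x) + (x - u)) by ring.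
      eapply Rle_lt_trans; [apply Rabs_triang|]. lra.
    - replace (y' - v) with ((y' - y) + (y - v)) by ring.
      eapply Rle_lt_trans; [apply Rabs_triang|]. lra. }
  replace (f x' y' - f x y) with ((f x' y' - f u v) - (f x y - f u v)) by ring.
  eapply Rle_lt_trans; [apply Rabs_triang|]. rewrite Rabs_Ropp. lra.
Qed.

Lemma cont_pt_x (f : R -> R -> R) y : cont f -> forall c, continuity_pt (fun s => f s y) c.
Proof.
  intros Hf c. unfold continuity_pt, continue_in, limit1_in, limit_in; simpl; unfold R_dist.
  intros e He. destruct (Hf c y e He) as [d [Hd Hk]].
  exists d. split; [auto|]. intros x [_ Hx]. apply Hk; auto. rewrite Rminus_eq_0, Rabs_R0. auto.
Qed.

Lemma max2 (f : R -> R -> R) a b a' b' : a <= b -> a' <= b' -> cont f ->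
  exists x y, a <= x <= b /\ a' <= y <= b' /\
    forall x' y', a <= x' <= b -> a' <= y' <= b' -> f x' y' <= f x y.
Proof.
  intros Hab Hab' Hf.
  assert (H : forall y, {x : R | (forall c, a <= c <= b -> f c y <= f x y) /\ a <= x <= b}).
  { intro y. apply constructive_indefinite_description.
    apply continuity_ab_maj; auto. intros c _. apply cont_pt_x; auto. }
  pose (xm := fun y => proj1_sig (H y)).
  assert (Hxm : forall y, (forall c, a <= c <= b -> f c y <= f (xm y) y) /\ a <= xm y <= b).
  { intro y. exact (proj2_sig (H y)). }
  clearbody xm.
  destruct (continuity_ab_maj (fun y => f (xm y) y) a' b') as [ys [Hys1 Hys2]]; auto.
  { intros c Hc. unfold continuity_pt, continue_in, limit1_in, limit_in; simpl; unfold R_dist.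
    intros e He. destruct (unif f a b a' b' Hf e He) as [d [Hd Hk]].
    exists d. split; [auto|]. intros y [_ Hy].
    destruct (Hxm y) as [Hm1 Hm2]. destruct (Hxm c) as [Hm3 Hm4].
    assert (B1 : Rabs (f (xm y) y - f (xm y) c) < e).
    { apply Hk; auto. rewrite Rminus_eq_0, Rabs_R0; auto. }
    assert (B2 : Rabs (f (xm c) y - f (xm c) c) < e).
    { apply Hk; auto. rewrite Rminus_eq_0, Rabs_R0; auto. }
    specialize (Hm1 (xm c) Hm4). specialize (Hm3 (xm y) Hm2).
    apply Rabs_def2 in B1. apply Rabs_def2 in B2. apply Rabs_def1; lra. }
  exists (xm ys), ys. destruct (Hxm ys) as [Hm1 Hm2].
  split; [auto| split; [auto|]].
  intros x' y' Hx' Hy'. destruct (Hxm y') as [Hm3 _].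
  eapply Rle_trans; [apply Hm3; auto| apply Hys1; auto].
Qed.

Lemma smp (f : R -> R -> R) a b a' b' m : a <= b -> a' <= b' -> cont f ->
  (forall x y, a < x < b -> a' < y < b' -> exists g1 g2 Dx Dy,
     (forall t, is_derive (fun s => f s y) t (g1 t)) /\ is_derive g1 x Dx /\
     (forall t, is_derive (fun s => f x s) t (g2 t)) /\ is_derive g2 y Dy /\ 0 < Dx + Dy) ->
  (forall x y, a <= x <= b -> a' <= y <= b' -> (x = a \/ x = b \/ y = a' \/ y = b') -> f x y <= m) ->
  forall x y, a <= x <= b -> a' <= y <= b' -> f x y <= m.
Proof.
  intros Hab Hab' Hf Hint Hbd x y Hx Hy.
  destruct (max2 f a b a' b' Hab Hab' Hf) as [xs [ys [Hxs [Hys Hmax]]]].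
  eapply Rle_trans; [apply Hmax; auto|].
  apply Rnot_lt_le; intro Hlt.
  assert (Hin : a < xs < b /\ a' < ys < b').
  { destruct (Req_dec xs a); [subst; pose proof (Hbd a ys Hxs Hys ltac:(tauto)); lra|].
    destruct (Req_dec xs b); [subst; pose proof (Hbd b ys Hxs Hys ltac:(tauto)); lra|].
    destruct (Req_dec ys a'); [subst; pose proof (Hbd xs a' Hxs Hys ltac:(tauto)); lra|].
    destruct (Req_dec ys b'); [subst; pose proof (Hbd xs b' Hxs Hys ltac:(tauto)); lra|].
    lra. }
  destruct Hin as [Hxi Hyi].
  destruct (Hint xs ys Hxi Hyi) as [g1 [g2 [Dx [Dy [H1 [H2 [H3 [H4 H5]]]]]]]].
  assert (Dx <= 0).
  { apply (d2_max (fun s => f s ys) g1 xs Dx (Rmin (xs - a) (b - xs))); auto.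
    - apply Rmin_pos; lra.
    - intros t Ht. apply Hmax; auto. apply Rabs_def2 in Ht.
      pose proof (Rmin_l (xs - a) (b - xs)). pose proof (Rmin_r (xs - a) (b - xs)). lra. }
  assert (Dy <= 0).
  { apply (d2_max (fun s => f xs s) g2 ys Dy (Rmin (ys - a') (b' - ys))); auto.
    - apply Rmin_pos; lra.
    - intros t Ht. apply Hmax; auto. apply Rabs_def2 in Ht.
      pose proof (Rmin_l (ys - a') (b' - ys)). pose proof (Rmin_r (ys - a') (b' - ys)). lra. }
  lra.
Qed.

Lemma isd_comb (f1 f2 p : R -> R) x d1 d2 dp :
  is_derive f1 x d1 -> is_derive f2 x d2 -> is_derive p x dp ->
  is_derive (fun s => f1 s - f2 s + p s) x (d1 - d2 + dp).
Proof.
  intros H1 H2 H3.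
  apply (is_derive_plus (fun s => f1 s - f2 s) p). 2: exact H3.
  apply (is_derive_minus f1 f2); auto.
Qed.

Lemma isd_refl (F : R -> R) c t d :
  is_derive F (2 * c - t) d -> is_derive (fun s => F (2 * c - s)) t (- d).
Proof.
  intros H.
  assert (Hg : is_derive (fun s => 2 * c - s) t (-1)).
  { auto_derive; auto; ring. }
  pose proof (is_derive_comp F (fun s => 2 * c - s) t d (-1) H Hg) as K.
  replace (- d) with (scal (-1) d : R). exact K.
  unfold scal; simpl; unfold mult; simpl. ring.
Qed.

Lemma cont_ext f g : (forall x y, f x y = g x y) -> cont f -> cont g.
Proof.
  intros E Hf x y e He. destruct (Hf x y e He) as [d [Hd K]].
  exists d. split; auto. intros x' y' H1 H2. rewrite <- !E. auto.
Qed.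

Lemma cont_plus f g : cont f -> cont g -> cont (fun x y => f x y + g x y).
Proof.
  intros Hf Hg x y e He.
  destruct (Hf x y (e/2) ltac:(lra)) as [d1 [Hd1 K1]].
  destruct (Hg x y (e/2) ltac:(lra)) as [d2 [Hd2 K2]].
  exists (Rmin d1 d2). split; [apply Rmin_pos; auto|].
  intros x' y' H1 H2.
  pose proof (Rmin_l d1 d2). pose proof (Rmin_r d1 d2).
  specialize (K1 x' y' ltac:(lra) ltac:(lra)). specialize (K2 x' y' ltac:(lra) ltac:(lra)).
  replace (f x' y' + g x' y' - (f x y + g x y)) with ((f x' y' - f x y) + (g x' y' - g x y)) by ring.
  eapply Rle_lt_trans; [apply Rabs_triang|]. lra.
Qed.

Lemma cont_opp f : cont f -> cont (fun x y => - f x y).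
Proof.
  intros Hf x y e He. destruct (Hf x y e He) as [d [Hd K]].
  exists d. split; auto. intros x' y' H1 H2.
  replace (- f x' y' - - f x y) with (- (f x' y' - f x y)) by ring.
  rewrite Rabs_Ropp. auto.
Qed.

Lemma cont_x (f : R -> R) : (forall x, continuity_pt f x) -> cont (fun x y => f x).
Proof.
  intros Hf x y e He. specialize (Hf x e He). destruct Hf as [d [Hd K]].
  exists d. split; auto. intros x' y' H1 H2.
  destruct (Req_dec x' x) as [->|Hne].
  - rewrite Rminus_eq_0, Rabs_R0; auto.
  - apply K. split; [split; [exact I| auto]| exact H1].
Qed.

Lemma cont_y (f : R -> R) : (forall x, continuity_pt f x) -> cont (fun x y => f y).
Proof.
  intros Hf x y e He. specialize (Hf y e He). destruct Hf as [d [Hd K]].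
  exists d. split; auto. intros x' y' H1 H2.
  destruct (Req_dec y' y) as [->|Hne].
  - rewrite Rminus_eq_0, Rabs_R0; auto.
  - apply K. split; [split; [exact I| auto]| exact H2].
Qed.

Lemma cont_refl U c : cont U -> cont (fun x y => U (2 * c - x) y).
Proof.
  intros Hf x y e He. destruct (Hf (2 * c - x) y e He) as [d [Hd K]].
  exists d. split; auto. intros x' y' H1 H2. apply K; auto.
  replace (2 * c - x' - (2 * c - x)) with (- (x' - x)) by ring. rewrite Rabs_Ropp; auto.
Qed.

Lemma cont_swap U : cont U -> cont (fun x y => U y x).
Proof.
  intros Hf x y e He. destruct (Hf y x e He) as [d [Hd K]].
  exists d. split; auto.
Qed.

Lemma poly_cont (f : R -> R) : (forall x, ex_derive f x) -> forall x, continuity_pt f x.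
Proof.
  intros H x. apply continuity_pt_filterlim. exact (@ex_derive_continuous R_AbsRing R_NormedModule f x (H x)).
Qed.

Definition harm2 (U Ux Uxx Uy Uyy : R -> R -> R) : Prop :=
  (forall x y, is_derive (fun t => U t y) x (Ux x y)) /\
  (forall x y, is_derive (fun t => Ux t y) x (Uxx x y)) /\
  (forall x y, is_derive (fun t => U x t) y (Uy x y)) /\
  (forall x y, is_derive (fun t => Uy x t) y (Uyy x y)) /\
  (forall x y, Uxx x y + Uyy x y = 0) /\ cont U.

Lemma half U Ux Uxx Uy Uyy M c x0 y0 : harm2 U Ux Uxx Uy Uyy ->
  (forall x y, Rabs (U x y) <= M) -> c < x0 -> U x0 y0 <= U (2 * c - x0) y0.
Proof.
  intros [HUx [HUxx [HUy [HUyy [Hlap HC]]]]] HM Hc.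
  apply Rnot_lt_le; intro Hlt.
  set (eta := U x0 y0 - U (2 * c - x0) y0).
  assert (Heta : 0 < eta) by (unfold eta; lra).
  assert (HM0 : 0 <= M) by (pose proof (HM 0 0); pose proof (Rabs_pos (U 0 0)); lra).
  set (K := 2 * M + 1).
  set (dd := x0 - c).
  assert (Hy0 : 0 <= y0 ^ 2) by nra.
  assert (HQ : 0 <= K * (y0 ^ 2 + 2 * dd) / eta).
  { apply Rmult_le_pos; [|left; apply Rinv_0_lt_compat; auto]. unfold K, dd; nra. }
  set (R0 := 1 + dd + Rabs y0 + K * (y0 ^ 2 + 2 * dd) / eta).
  pose proof (Rabs_pos y0).
  assert (HR1 : 1 <= R0) by (unfold R0, dd in *; lra).
  assert (HR2 : dd < R0) by (unfold R0, dd in *; lra).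
  assert (HR3 : Rabs y0 < R0) by (unfold R0, dd in *; lra).
  assert (HR4 : K * (y0 ^ 2 + 2 * dd) / eta < R0) by (unfold R0, dd in *; lra).
  set (eps := K / R0 ^ 2).
  assert (Heps : 0 < eps).
  { unfold eps, K. apply Rdiv_lt_0_compat; [lra| apply pow_lt; lra]. }
  assert (HepsR : eps * R0 ^ 2 = K) by (unfold eps; field; lra).
  set (P := fun (del : R) (x y : R) => - (eps * (- (x - c) ^ 2 + 2 * R0 * (x - c)) + eps * y ^ 2) + del * (x - c) ^ 2).
  set (hp := eps * (- dd ^ 2 + 2 * R0 * dd) + eps * y0 ^ 2).
  assert (Hhp : hp < eta).
  { assert (HK : 0 < K) by (unfold K; lra).
    assert (HQ2 : K * (y0 ^ 2 + 2 * dd) < eta * R0).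
    { unfold Rdiv in HR4. apply Rmult_lt_compat_r with (r := eta) in HR4; auto.
      rewrite Rmult_assoc, Rinv_l, Rmult_1_r in HR4 by lra. lra. }
    assert (E : hp * R0 ^ 2 = K * (- dd ^ 2 + 2 * R0 * dd + y0 ^ 2)).
    { unfold hp. rewrite <- HepsR. ring. }
    assert (hp * R0 ^ 2 <= R0 * (K * (y0 ^ 2 + 2 * dd))).
    { rewrite E. assert (0 <= dd ^ 2) by nra. assert (y0 ^ 2 <= y0 ^ 2 * R0) by nra. nra. }
    assert (0 < R0 ^ 2) by (apply pow_lt; lra).
    assert (hp * R0 ^ 2 < eta * R0 ^ 2) by nra. nra. }
  set (del := (eta - hp) / (2 * R0 ^ 2)).
  assert (Hdel : 0 < del).
  { unfold del. apply Rdiv_lt_0_compat; [lra|]. assert (0 < R0 ^ 2) by (apply pow_lt; lra). lra. }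
  assert (Hmp := smp (fun x y => U x y - U (2 * c - x) y + P del x y) c (c + R0) (- R0) R0 (del * R0 ^ 2)
     ltac:(lra) ltac:(lra)).
  assert (Hfin : U x0 y0 - U (2 * c - x0) y0 + P del x0 y0 <= del * R0 ^ 2).
  { apply Hmp.
    - apply (cont_ext (fun x y => (U x y + - U (2 * c - x) y) +
          ((- (eps * (- (x - c) ^ 2 + 2 * R0 * (x - c))) + del * (x - c) ^ 2) + (- (eps * y ^ 2))))).
      { intros x y. unfold P. ring. }
      apply (cont_plus (fun x y => U x y + - U (2 * c - x) y)).
      + apply (cont_plus U (fun x y => - U (2 * c - x) y)); auto.
        apply (cont_opp (fun x y => U (2 * c - x) y)). apply cont_refl; auto.
      + apply (cont_plus (fun x y => - (eps * (- (x - c) ^ 2 + 2 * R0 * (x - c))) + del * (x - c) ^ 2)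
                         (fun x y => - (eps * y ^ 2))).
        * apply (cont_x (fun x => - (eps * (- (x - c) ^ 2 + 2 * R0 * (x - c))) + del * (x - c) ^ 2)).
          apply poly_cont. intro; auto_derive; auto.
        * apply (cont_y (fun y => - (eps * y ^ 2))).
          apply poly_cont. intro; auto_derive; auto.
    - intros x y Hx Hy.
      exists (fun t => Ux t y - (- Ux (2 * c - t) y) + (- (eps * (- (2 * (t - c)) + 2 * R0)) + 2 * del * (t - c))).
      exists (fun t => Uy x t - Uy (2 * c - x) t + (- (eps * (2 * t)))).
      exists (Uxx x y - (- - Uxx (2 * c - x) y) + (2 * eps + 2 * del)).
      exists (Uyy x y - Uyy (2 * c - x) y + (- (eps * 2))).
      split; [|split; [|split; [|split]]].
      + intro t. apply (isd_comb (fun s => U s y) (fun s => U (2 * c - s) y) (fun s => P del s y)).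
        * apply HUx.
        * apply (isd_refl (fun s => U s y)). apply HUx.
        * unfold P. auto_derive; auto. ring.
      + apply (isd_comb (fun t => Ux t y) (fun t => - Ux (2 * c - t) y)
             (fun t => - (eps * (- (2 * (t - c)) + 2 * R0)) + 2 * del * (t - c))).
        * apply HUxx.
        * apply (is_derive_opp (fun t => Ux (2 * c - t) y)).
          apply (isd_refl (fun s => Ux s y)). apply HUxx.
        * auto_derive; auto. ring.
      + intro t. apply (isd_comb (fun s => U x s) (fun s => U (2 * c - x) s) (fun s => P del x s)).
        * apply HUy.
        * apply HUy.
        * unfold P. auto_derive; auto. ring.
      + apply (isd_comb (fun t => Uy x t) (fun t => Uy (2 * c - x) t) (fun t => - (eps * (2 * t)))).
        * apply HUyy.
        * apply HUyy.
        * auto_derive; auto. ring.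
      + pose proof (Hlap x y). pose proof (Hlap (2 * c - x) y). lra.
    - intros x y Hx Hy Hb.
      assert (HW : U x y - U (2 * c - x) y <= 2 * M).
      { pose proof (HM x y). pose proof (HM (2 * c - x) y).
        apply Rabs_le_between in H0. apply Rabs_le_between in H1. lra. }
      assert (HK : 2 * M < K) by (unfold K; lra).
      assert (Hs : 0 <= x - c <= R0) by lra.
      assert (Hs2 : (x - c) ^ 2 <= R0 ^ 2) by nra.
      assert (Hdel2 : del * (x - c) ^ 2 <= del * R0 ^ 2) by (apply Rmult_le_compat_l; lra).
      assert (Hy2 : 0 <= eps * y ^ 2) by (apply Rmult_le_pos; nra).
      assert (Hq : 0 <= eps * ((x - c) * (2 * R0 - (x - c)))) by (apply Rmult_le_pos; nra).
      unfold P. destruct Hb as [Hb|[Hb|[Hb|Hb]]].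
      + subst x. replace (2 * c - c) with c by ring. nra.
      + subst x. replace (c + R0 - c) with R0 by ring. nra.
      + subst y. assert (eps * (- R0) ^ 2 = K) by (rewrite <- HepsR; ring). nra.
      + subst y. nra.
    - unfold dd in HR2. lra.
    - apply Rabs_def2 in HR3. lra. }
  assert (HP0 : P del x0 y0 = - hp + del * dd ^ 2) by (unfold P, hp, dd; ring).
  rewrite HP0 in Hfin. fold eta in Hfin.
  assert (del * R0 ^ 2 = (eta - hp) / 2) by (unfold del; field; lra).
  assert (0 <= del * dd ^ 2) by (apply Rmult_le_pos; [lra| nra]).
  lra.
Qed.

Lemma harm2_opp U Ux Uxx Uy Uyy : harm2 U Ux Uxx Uy Uyy ->
  harm2 (fun x y => - U x y) (fun x y => - Ux x y) (fun x y => - Uxx x y)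
        (fun x y => - Uy x y) (fun x y => - Uyy x y).
Proof.
  intros [H1 [H2 [H3 [H4 [H5 H6]]]]].
  split; [|split; [|split; [|split; [|split]]]].
  - intros x y. apply (is_derive_opp (fun t => U t y)). apply H1.
  - intros x y. apply (is_derive_opp (fun t => Ux t y)). apply H2.
  - intros x y. apply (is_derive_opp (fun t => U x t)). apply H3.
  - intros x y. apply (is_derive_opp (fun t => Uy x t)). apply H4.
  - intros x y. pose proof (H5 x y). lra.
  - apply cont_opp; auto.
Qed.

Lemma harm2_swap U Ux Uxx Uy Uyy : harm2 U Ux Uxx Uy Uyy ->
  harm2 (fun x y => U y x) (fun x y => Uy y x) (fun x y => Uyy y x)
        (fun x y => Ux y x) (fun x y => Uxx y x).
Proof.
  intros [H1 [H2 [H3 [H4 [H5 H6]]]]].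
  split; [|split; [|split; [|split; [|split]]]].
  - intros x y. apply H3.
  - intros x y. apply H4.
  - intros x y. apply H1.
  - intros x y. apply H2.
  - intros x y. pose proof (H5 y x). lra.
  - apply (cont_swap U); auto.
Qed.

Lemma xconst U Ux Uxx Uy Uyy M : harm2 U Ux Uxx Uy Uyy ->
  (forall x y, Rabs (U x y) <= M) -> forall a a' y, U a y = U a' y.
Proof.
  intros H HM.
  assert (Hlt : forall a a' y, a < a' -> U a y = U a' y).
  { intros a a' y Ha.
    pose proof (half U Ux Uxx Uy Uyy M ((a + a') / 2) a' y H HM ltac:(lra)) as K1.
    pose proof (half _ _ _ _ _ M ((a + a') / 2) a' y (harm2_opp _ _ _ _ _ H)) as K2.
    simpl in K2.
    assert (K3 : - U a' y <= - U (2 * ((a + a') / 2) - a') y).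
    { apply K2; [|lra]. intros x0 y0. rewrite Rabs_Ropp. auto. }
    replace (2 * ((a + a') / 2) - a') with a in K1, K3 by field. lra. }
  intros a a' y. destruct (Rtotal_order a a') as [h|[h|h]].
  - auto.
  - subst; auto.
  - symmetry; auto.
Qed.

Lemma liouville2 U Ux Uxx Uy Uyy M : harm2 U Ux Uxx Uy Uyy ->
  (forall x y, Rabs (U x y) <= M) -> forall a b a' b', U a b = U a' b'.
Proof.
  intros H HM a b a' b'.
  rewrite (xconst U Ux Uxx Uy Uyy M H HM a a' b).
  apply (xconst _ _ _ _ _ M (harm2_swap _ _ _ _ _ H)).
  intros; apply HM.
Qed.

Lemma cont_of_continuous (u : C -> R) : (forall z, continuous u z) -> cont (fun x y => u (x, y)).
Proof.
  intros Hc x y e He.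
  specialize (Hc (x, y)).
  apply filterlim_locally with (eps := mkposreal e He) in Hc.
  destruct Hc as [d Hd].
  exists d. split; [apply cond_pos|]. intros x' y' H1 H2.
  exact (Hd (x', y') (conj H1 H2)).
Qed.

Lemma harm_harm2 (u : C -> R) : harmonic u ->
  harm2 (fun x y => u (x, y)) (fun x y => dx u (x, y)) (fun x y => dx (dx u) (x, y))
        (fun x y => dy u (x, y)) (fun x y => dy (dy u) (x, y)).
Proof.
  intros [[Hp [Hpx [Hpy Hc]]] Hl].
  split; [|split; [|split; [|split; [|split]]]].
  - intros x y. apply Derive_correct. apply (proj1 (Hp (x, y))).
  - intros x y. apply Derive_correct. apply (proj1 (Hpx (x, y))).
  - intros x y. apply Derive_correct. apply (proj2 (Hp (x, y))).
  - intros x y. apply Derive_correct. apply (proj2 (Hpy (x, y))).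
  - intros x y. apply Hl.
  - apply cont_of_continuous. intro z. apply (proj1 (Hc z)).
Qed.

Lemma harm_const (u : C -> R) M : harmonic u -> (forall z, Rabs (u z) <= M) ->
  forall z1 z2, u z1 = u z2.
Proof.
  intros H HM [a b] [a' b'].
  apply (liouville2 _ _ _ _ _ M (harm_harm2 u H)). intros; apply HM.
Qed.

Theorem corollary2 (u v : C -> R) :
  harmonic u -> harmonic v ->
  (exists z1 z2 : C, (u z1, v z1) <> (u z2, v z2)) ->
  (exists d : C, asymptotic_direction (image (fun z => (u z, v z))) d) /\
  closed (asymptotic_direction (image (fun z => (u z, v z)))).
Proof.
  intros Hu Hv [z1 [z2 Hne]].
  split; [|apply closed_ad].
  apply nonempty_ad.
  intro K. apply NNPP; intro Hn.
  assert (HB : forall z, Cmod (u z, v z) <= K).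
  { intro z. apply Rnot_lt_le. intro Hlt. apply Hn. exists (u z, v z).
    split; [exists z; reflexivity| exact Hlt]. }
  assert (Bu : forall z, Rabs (u z) <= K).
  { intro z. eapply Rle_trans; [apply (re_le_Cmod (u z, v z))| apply HB]. }
  assert (Bv : forall z, Rabs (v z) <= K).
  { intro z. eapply Rle_trans; [|apply (HB z)].
    eapply Rle_trans; [|apply (Rmax_Cmod (u z, v z))]. apply Rmax_r. }
  apply Hne. rewrite (harm_const u K Hu Bu z1 z2), (harm_const v K Hv Bv z1 z2). reflexivity.
Qed.
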